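(* Let $P(x)=a_nx^n+a_{n-1}x^{n-1}+\cdots+a_1x$ with integer coefficients $a_i\ge 0$, $a_n\ne 0$, and $\gcd(a_n,\dots,a_1)=1$. For integers $0<t<a$ define $m_{a,t}=\dfrac{P(a)}{\gcd(P(a),P(t))}$. Then \[ \mathsf{dens}(\mathcal{L}(a_n,\dots,a_1))=\lim_{N\to\infty}\frac{\displaystyle\sum_{a=1}^{N}\ \sum_{J\subseteq\{1,\dots,a-1\}}(-1)^{|J|}\left\lfloor\frac{N}{\operatorname{lcm}(m_{a,t}:t\in J)}\right\rfloor}{N^2}. \]
   Context: $\mathbb{N}$ denotes the positive integers; $\operatorname{lcm}$ over the empty set is $1$. The family $\mathcal{F}(a_n,\dots,a_1)=\{y=q(a_nx^n+\cdots+a_1x): q\in\mathbb{Q}^+\}$. A point $(r,s)\in\mathbb{N}^2$ is $\mathcal{F}(a_n,\dots,a_1)$-visible if there is $q\in\mathbb{Q}^+$ with $s=q(a_nr^n+\cdots+a_1r)$ and no other point of $\mathbb{N}^2$ lies on the curve $y=q(a_nx^n+\cdots+a_1x)$ between the origin and $(r,s)$; $\mathcal{L}(a_n,\dots,a_1)$ is the set of all such points. For $S\subseteq\mathbb{N}^2$, $\mathsf{dens}(S)=\lim_{N\to\infty}|S\cap R_N|/N^2$ (when the limit exists), where $R_N=\{(x,y)\in\mathbb{Z}^2:1\le x,y\le N\}$. *)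

(* Defs.v *)
From HB Require Import structures.
From mathcomp Require Import all_boot all_order all_algebra.
From mathcomp Require Import all_classical all_reals all_analysis.
Set Implicit Arguments. Unset Strict Implicit. Unset Printing Implicit Defensive.
Import Order.TTheory GRing.Theory Num.Theory.

Definition polyP (n : nat) (a : nat -> nat) (x : nat) : nat :=
  \sum_(1 <= i < n.+1) a i * x ^ i.

(* (r,s) in N^2 (positive integers) is F(a_n,...,a_1)-visible: there is a
   positive rational q with s = q P(r) and no other point (x,y) of N^2 on
   y = q P(x) strictly between the origin and (r,s), i.e. with 0 < x < r. *)
Definition visible (n : nat) (a : nat -> nat) (r s : nat) : Prop :=
  (0 < r)%N /\ (0 < s)%N /\
  exists q : rat, (0 < q)%R /\ (s%:R = q * (polyP n a r)%:R)%R /\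
    forall x y : nat, (0 < x)%N -> (0 < y)%N -> (x < r)%N ->
      (y%:R <> q * (polyP n a x)%:R)%R.

Definition count_visible (n : nat) (a : nat -> nat) (N : nat) : nat :=
  \sum_(1 <= r < N.+1) \sum_(1 <= s < N.+1) (`[< visible n a r s >] : nat).

Definition m_at (n : nat) (a : nat -> nat) (b t : nat) : nat :=
  polyP n a b %/ gcdn (polyP n a b) (polyP n a t).

Definition incl_excl_sum (R : realType) (n : nat) (a : nat -> nat) (N : nat) : R :=
  \sum_(1 <= b < N.+1)
     \sum_(J : {set 'I_b} | [forall t in J, (0 < val t)%N])
        ((-1) ^+ #|J| * (N %/ \big[lcmn/1%N]_(t in J) m_at n a b (val t))%:R)%R.

(* Main.v *)
Require Import Defs.
From HB Require Import structures.
From mathcomp Require Import all_boot all_order all_algebra.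
From mathcomp Require Import all_classical all_reals all_analysis.
Import Order.TTheory GRing.Theory Num.Theory numFieldNormedType.Exports.
Local Open Scope classical_set_scope.
Local Open Scope ring_scope.

Lemma dvd_div_gcd (A B s : nat) : (0 < A)%N ->
  (A %/ gcdn A B %| s)%N = (A %| s * B)%N.
Proof.
move=> A0.
have g0 : (0 < gcdn A B)%N by rewrite gcdn_gt0 A0.
rewrite -(@dvdn_pmul2r (gcdn A B)) // divnK ?dvdn_gcdl //.
rewrite [(s * gcdn _ _)%N]muln_gcdr; apply/idP/idP => H.
  by apply: dvdn_trans H (dvdn_gcdr _ _).
by rewrite dvdn_gcd H dvdn_mull.
Qed.

Lemma polyP_gt0 n a x : (1 <= n)%N -> (0 < a n)%N -> (0 < x)%N -> (0 < Defs.polyP n a x)%N.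
Proof.
move=> hn han hx; rewrite /Defs.polyP.
rewrite big_nat_recr //=.
by rewrite addn_gt0 muln_gt0 han expn_gt0 hx orbT.
Qed.

Lemma m_at_gt0 n a b t : (1 <= n)%N -> (0 < a n)%N -> (0 < b)%N -> (0 < m_at n a b t)%N.
Proof.
move=> hn han hb; have P0 := @polyP_gt0 n a b hn han hb.
rewrite /m_at divn_gt0 ?gcdn_gt0 ?P0 //; apply: dvdn_leq => //; exact: dvdn_gcdl.
Qed.
Lemma vis_iff n a r s : (1 <= n)%N -> (0 < a n)%N -> (0 < r)%N -> (0 < s)%N ->
  visible n a r s <-> [forall t : 'I_r, (0 < t)%N ==> ~~ (m_at n a r t %| s)%N].
Proof.
move=> hn han hr hs.
have Pr := @polyP_gt0 n a r hn han hr.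
have Prq : (Defs.polyP n a r)%:R != 0 :> rat by rewrite pnatr_eq0 -lt0n.
split.
- move=> [_ [_ [q [q0 [hsq hx]]]]].
  apply/forallP => t; apply/implyP => t0; apply/negP.
  rewrite /m_at dvd_div_gcd // => hd.
  have Pt := @polyP_gt0 n a t hn han t0.
  apply: (hx t (s * Defs.polyP n a t %/ Defs.polyP n a r)%N t0 _ (ltn_ord t)).
    by rewrite divn_gt0 // dvdn_leq // muln_gt0 hs Pt.
  have -> : q = s%:R / (Defs.polyP n a r)%:R by rewrite hsq mulfK.
  apply: (mulIf Prq).
  by rewrite -natrM divnK // natrM mulrAC mulfVK.
- move=> /forallP H; split => //; split => //.
  exists (s%:R / (Defs.polyP n a r)%:R); split.
    by rewrite divr_gt0 // ltr0n.
  split; first by rewrite mulfVK.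
  move=> x y x0 y0 xr hy.
  have := H (Ordinal xr); rewrite /= x0 /= /m_at dvd_div_gcd //.
  move/negP; apply; apply/dvdnP; exists y.
  apply/eqP; rewrite -(eqr_nat rat) !natrM hy.
  by rewrite mulrAC mulfVK.
Qed.
Lemma prodb (T : finType) (A : {pred T}) (c : T -> bool) :
  (\prod_(i in A) (c i : nat))%N = [forall i in A, c i] :> nat.
Proof.
case: (boolP [forall i in A, c i]) => H.
  by rewrite big1 // => i iA; have := forallP H i; rewrite iA /= => ->.
move: H; rewrite negb_forall => /existsP [i]; rewrite negb_imply => /andP [iA ci].
by rewrite (bigD1 i) //= (negbTE ci).
Qed.

Lemma count_mult d N : (0 < d)%N -> (\sum_(1 <= s < N.+1) ((d %| s) : nat))%N = (N %/ d)%N.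
Proof.
move=> d0; elim: N => [|N IH]; first by rewrite big_geq // div0n.
by rewrite big_nat_recr //= IH divnS // addnC.
Qed.

Lemma IE (R : comNzRingType) (T : finType) (P : pred T) (m : T -> nat)
  (hm : forall t, (0 < m t)%N) N :
  ((\sum_(1 <= s < N.+1) ([forall t, P t ==> ~~ (m t %| s)%N] : nat))%N)%:R =
  \sum_(J : {set T} | [forall t in J, P t])
     ((-1) ^+ #|J| * (N %/ \big[lcmn/1%N]_(t in J) m t)%:R) :> R.
Proof.
rewrite natr_sum.
have step : forall s, ([forall t, P t ==> ~~ (m t %| s)%N] : nat)%:R =
   \sum_(J : {set T}) (-1) ^+ #|J| *
      (([forall t in J, P t] && (\big[lcmn/1%N]_(t in J) m t %| s)%N) : nat)%:R :> R.
  move=> s.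
  have -> : ([forall t, P t ==> ~~ (m t %| s)%N] : nat)%:R =
       \prod_t (- (((P t && (m t %| s)%N) : nat)%:R) + 1) :> R.
    rewrite -(@prodb _ predT (fun t => P t ==> ~~ (m t %| s)%N)) natr_prod.
    apply: eq_bigr => t _.
    by case: (P t); case: (m t %| s)%N; rewrite /= ?mulr0n ?mulr1n ?addNr ?oppr0 ?add0r.
  rewrite bigA_distr; apply: eq_bigr => J _.
  rewrite -big_mkcond /= prodrN; congr (_ * _).
  rewrite -natr_prod prodb; congr ((nat_of_bool _)%:R).
  apply/idP/idP.
    move=> /forall_inP H; apply/andP; split.
      by apply/forall_inP => t tJ; have /andP[] := H t tJ.
    by apply/dvdn_biglcmP => t tJ; have /andP[] := H t tJ.
  move=> /andP [/forall_inP H1 /dvdn_biglcmP H2]; apply/forall_inP => t tJ.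
  by rewrite H1 // H2.
rewrite (eq_bigr _ (fun s _ => step s)) exchange_big /= [RHS]big_mkcond /=.
apply: eq_bigr => J _; rewrite -mulr_sumr; case: ifP => HJ; last first.
  by rewrite big1 ?mulr0.
congr (_ * _); rewrite -natr_sum; congr (_%:R).
rewrite -count_mult; last first.
  by elim/big_ind: _ => // x y x0 y0; rewrite lcmn_gt0 x0 y0.
by [].
Qed.
Lemma count_eq (R : realType) n a N : (1 <= n)%N -> (0 < a n)%N ->
  (count_visible n a N)%:R = incl_excl_sum R n a N.
Proof.
move=> hn han.
rewrite /count_visible /incl_excl_sum natr_sum.
apply: eq_big_nat => r /andP [r0 _].
rewrite -(@IE R _ (fun t : 'I_r => (0 < val t)%N) (fun t => m_at n a r (val t))); last first.
  by move=> t; apply: m_at_gt0.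
congr (_%:R); apply: eq_big_nat => s /andP [s0 _].
by rewrite (asbool_equiv_eqP idP (@vis_iff n a r s hn han r0 s0)).
Qed.

Theorem lemma3p9 (R : realType) (n : nat) (a : nat -> nat)
  (hn : (1 <= n)%N) (han : (0 < a n)%N)
  (hgcd : \big[gcdn/0%N]_(1 <= i < n.+1) a i = 1%N) (l : R) :
  ((fun N : nat => (count_visible n a N)%:R / (N%:R ^+ 2) : R) @ \oo --> l)
  <->
  ((fun N : nat => incl_excl_sum R n a N / (N%:R ^+ 2)) @ \oo --> l).
Proof.
have -> : (fun N : nat => (count_visible n a N)%:R / (N%:R ^+ 2) : R) =
          (fun N : nat => incl_excl_sum R n a N / (N%:R ^+ 2)).
  by apply: funext => N; rewrite count_eq.
by [].
Qed.
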